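(* Let $T$ be a rooted binary phylogenetic tree with leaf set $X$ under the $N_2$ model. Then $$RA_{\rm MP}(T)\ge 1-p_{\max},\qquad p_{\max}=\max\{p(x):x\in X\}.$$
   Context: A rooted binary phylogenetic tree is a finite tree with a distinguished root vertex $\rho$, all edges directed away from $\rho$, in which $\rho$ has out-degree 2 (or 1), and every other vertex has in-degree 1 and out-degree 0 or 2; out-degree-0 vertices are leaves, forming the leaf set $X$. Under the Neyman 2-state model $N_2$ on a state set $\mathcal A$ with $|\mathcal A|=2$, each edge $e$ carries a substitution probability $p_e\in[0,\frac12]$; given the root state $F(\rho)$, states propagate independently along edges: for an edge $(u,v)$, $F(v)=F(u)$ with probability $1-p_e$ and $F(v)$ is the other state otherwise. The character is $f=F|_X$, and $p(v)$ is the probability that $F(v)\ne F(\rho)$. Fitch sets: each leaf $x$ gets $\{f(x)\}$; a vertex with children $v_1,v_2$ gets $\mathrm{FS}(v_1)\cap\mathrm{FS}(v_2)$ if nonempty, else $\mathrm{FS}(v_1)\cup\mathrm{FS}(v_2)$; a vertex with one child gets its child's set. $\mathrm{MP}(f,T)$ is a uniformly random state from $\mathrm{FS}(\rho)$, and $RA_{\rm MP}(T)=\mathbb P(\mathrm{MP}(f,T)=\alpha\mid F(\rho)=\alpha)$. *)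

(* Defs.v *)
From HB Require Import structures.
From mathcomp Require Import all_boot all_order all_algebra.
Set Implicit Arguments. Unset Strict Implicit. Unset Printing Implicit Defensive.
Import Order.TTheory GRing.Theory Num.Theory.
Local Open Scope ring_scope.

(* A non-root vertex v together with the substitution probability of the
   edge entering v: either a leaf, or a vertex with two children. *)
Inductive ptree (R : Type) : Type :=
  | PLeaf of R
  | PNode of R & ptree R & ptree R.

(* The root: out-degree 1 or 2. *)
Inductive rtree (R : Type) : Type :=
  | Root1 of ptree R
  | Root2 of ptree R & ptree R.

Section N2.
Variable R : realFieldType.

Fixpoint pleaves (t : ptree R) : nat :=
  match t with PLeaf _ => 1%N | PNode _ l r => (pleaves l + pleaves r)%N end.

Definition nleaves (T : rtree R) : nat :=
  match T with Root1 t => pleaves t | Root2 l r => (pleaves l + pleaves r)%N end.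

Fixpoint pvalid (t : ptree R) : bool :=
  match t with
  | PLeaf p => (0 <= p) && (p <= 2^-1)
  | PNode p l r => [&& 0 <= p, p <= 2^-1, pvalid l & pvalid r]
  end.

Definition rvalid (T : rtree R) : bool :=
  match T with Root1 t => pvalid t | Root2 l r => pvalid l && pvalid r end.

Definition trans (p : R) (s x : bool) : R := if x == s then 1 - p else p.

(* probability of the leaf character f (leaves listed left to right) of the
   subtree below an edge, given the state s at the upper end of that edge *)
Fixpoint cprob (t : ptree R) (s : bool) (f : seq bool) : R :=
  match t with
  | PLeaf p => if f is [:: x] then trans p s x else 0
  | PNode p l r =>
      \sum_(x : bool) trans p s x * cprob l x (take (pleaves l) f)
                                  * cprob r x (drop (pleaves l) f)
  end.

(* P(f = F|_X | F(rho) = a) *)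
Definition rprob (T : rtree R) (a : bool) (f : seq bool) : R :=
  match T with
  | Root1 t => cprob t a f
  | Root2 l r => cprob l a (take (pleaves l) f) * cprob r a (drop (pleaves l) f)
  end.

Definition fitch_comb (A B : {set bool}) : {set bool} :=
  if A :&: B != set0 then A :&: B else A :|: B.

Fixpoint fitch_t (t : ptree R) (f : seq bool) : {set bool} :=
  match t with
  | PLeaf _ => [set head false f]
  | PNode _ l r => fitch_comb (fitch_t l (take (pleaves l) f))
                              (fitch_t r (drop (pleaves l) f))
  end.

Definition fitch (T : rtree R) (f : seq bool) : {set bool} :=
  match T with
  | Root1 t => fitch_t t f
  | Root2 l r => fitch_comb (fitch_t l (take (pleaves l) f))
                            (fitch_t r (drop (pleaves l) f))
  end.

(* RA_MP(T) = P(MP(f,T) = a | F(rho) = a), MP uniform on the Fitch set *)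
Definition RA_MP (T : rtree R) (a : bool) : R :=
  \sum_(f : (nleaves T).-tuple bool)
     rprob T a f * (if a \in fitch T f then (#|fitch T f|%:R)^-1 else 0).

(* p(x) = P(F(x) <> F(rho)) for the i-th leaf x (root state a) *)
Definition pleaf {T : rtree R} (a : bool) (i : 'I_(nleaves T)) : R :=
  \sum_(f : (nleaves T).-tuple bool)
     rprob T a f * (if tnth f i != a then 1 else 0).

Definition pmax (T : rtree R) (a : bool) : R :=
  \big[Num.max/0]_(i < nleaves T) pleaf a i.

End N2.

(* Main.v *)
Require Import Defs.
From HB Require Import structures.
From mathcomp Require Import all_boot all_order all_algebra.
From mathcomp Require Import ring lra.
Set Warnings "-notation-overridden,-ambiguous-paths".
Set Implicit Arguments. Unset Strict Implicit.
Import Order.TTheory GRing.Theory Num.Theory.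
Local Open Scope ring_scope.
Section S.
Variable R : realFieldType.
Fixpoint S (n : nat) (F : seq bool -> R) : R :=
  match n with 0%N => F [::]
  | n.+1 => S n (fun f => F (true :: f)) + S n (fun f => F (false :: f)) end.

Lemma S_ext n F G : (forall f, size f = n -> F f = G f) -> S n F = S n G.
Proof.
elim: n F G => [|n IH] F G H /=; first by rewrite H.
by congr (_ + _); apply: IH => f Hf; apply: H; rewrite /= Hf.
Qed.

Lemma S_add n F G : S n (fun f => F f + G f) = S n F + S n G.
Proof.
elim: n F G => [|n IH] F G //=.
rewrite (IH (fun f => F (true :: f))) (IH (fun f => F (false :: f))); lra.
Qed.

Lemma S_scale n c F : S n (fun f => c * F f) = c * S n F.
Proof. elim: n F => [|n IH] F //=.
rewrite (IH (fun f => F (true :: f))) (IH (fun f => F (false :: f))); lra. Qed.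

Lemma S_scaler n c F : S n (fun f => F f * c) = S n F * c.
Proof. rewrite mulrC -S_scale; apply: S_ext => f _; apply: mulrC. Qed.

Lemma S_sumb n (F : bool -> seq bool -> R) :
  S n (fun f => \sum_(x : bool) F x f) = \sum_(x : bool) S n (F x).
Proof.
transitivity (S n (fun f => F true f + F false f)).
  by apply: S_ext => f _; rewrite big_bool.
by rewrite S_add big_bool.
Qed.

Lemma S_ge0 n F : (forall f, 0 <= F f) -> 0 <= S n F.
Proof. elim: n F => [|n IH] F H //=; apply: addr_ge0; exact: IH. Qed.

Lemma S_cat n1 n2 F :
  S (n1 + n2) F = S n1 (fun f1 => S n2 (fun f2 => F (f1 ++ f2))).
Proof. elim: n1 F => [|n1 IH] F //=.
by rewrite (IH (fun f => F (true :: f))) (IH (fun f => F (false :: f))). Qed.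

Lemma S_prod n1 n2 (a b : seq bool -> R) :
  S n1 (fun f1 => S n2 (fun f2 => a f1 * b f2)) = S n1 a * S n2 b.
Proof.
rewrite -S_scaler; apply: S_ext => f _; exact: S_scale.
Qed.

Lemma S_tuple n (F : seq bool -> R) :
  \sum_(t : n.-tuple bool) F t = S n F.
Proof.
elim: n F => [|n IH] F /=.
  rewrite (big_pred1 [tuple]) // => t; apply/esym/eqP; apply: val_inj; by case: t => [[]].
rewrite (reindex (fun p : bool * n.-tuple bool => [tuple of p.1 :: p.2])) /=; last first.
  exists (fun t : n.+1.-tuple bool => (thead t, [tuple of behead t])) => /=.
    by move=> [x t] _ /=; congr (_, _); apply: val_inj.
  by move=> t _; apply: val_inj => /=; case: t => [[|x s]] //.
rewrite -(pair_big xpredT xpredT (fun x (t : n.-tuple bool) => F (x :: t))) /=.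
rewrite big_bool /=; congr (_ + _); exact: (IH (fun f => F (_ :: f))).
Qed.

Definition sg (b : bool) : R := if b then 1 else -1.
Definition xv (A : {set bool}) : R := (true \in A)%:R - (false \in A)%:R.
Definition Ex (t : ptree R) s (g : seq bool -> R) :=
  S (pleaves t) (fun f => cprob t s f * g f).
Definition N (cl cr : bool -> seq bool -> R) nl nr x (h : seq bool -> seq bool -> R) :=
  S nl (fun f1 => S nr (fun f2 => cl x f1 * cr x f2 * h f1 f2)).

Lemma N_ext cl cr nl nr x h h' :
  (forall f1 f2, size f1 = nl -> size f2 = nr -> h f1 f2 = h' f1 f2) ->
  N cl cr nl nr x h = N cl cr nl nr x h'.
Proof.
move=> H; apply: S_ext => f1 H1; apply: S_ext => f2 H2; by rewrite H.
Qed.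

Lemma N_add cl cr nl nr x h h' :
  N cl cr nl nr x (fun f1 f2 => h f1 f2 + h' f1 f2) =
  N cl cr nl nr x h + N cl cr nl nr x h'.
Proof.
rewrite /N -S_add; apply: S_ext => f1 _; rewrite -S_add; apply: S_ext => f2 _.
by rewrite mulrDr.
Qed.

Lemma N_scale cl cr nl nr x c h :
  N cl cr nl nr x (fun f1 f2 => c * h f1 f2) = c * N cl cr nl nr x h.
Proof.
rewrite /N -S_scale; apply: S_ext => f1 _; rewrite -S_scale; apply: S_ext => f2 _.
by rewrite mulrCA.
Qed.

Lemma N_prod cl cr nl nr x a b :
  N cl cr nl nr x (fun f1 f2 => a f1 * b f2) =
  S nl (fun f => cl x f * a f) * S nr (fun f => cr x f * b f).
Proof.
rewrite /N -S_prod; apply: S_ext => f1 _; apply: S_ext => f2 _.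
by rewrite mulrACA.
Qed.

Lemma Ex_node p l r s g :
  Ex (PNode p l r) s g =
  \sum_(x : bool) trans p s x *
     N (cprob l) (cprob r) (pleaves l) (pleaves r) x (fun f1 f2 => g (f1 ++ f2)).
Proof.
rewrite /Ex /= S_cat.
transitivity (S (pleaves l) (fun f1 => S (pleaves r) (fun f2 =>
   \sum_(x : bool) trans p s x * (cprob l x f1 * cprob r x f2 * g (f1 ++ f2))))).
  apply: S_ext => f1 H1; apply: S_ext => f2 H2.
  rewrite take_size_cat // drop_size_cat // mulr_suml; apply: eq_bigr => x _.
  by rewrite !mulrA.
transitivity (S (pleaves l) (fun f1 => \sum_(x : bool) S (pleaves r) (fun f2 =>
   trans p s x * (cprob l x f1 * cprob r x f2 * g (f1 ++ f2))))).
  by apply: S_ext => f1 _; rewrite S_sumb.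
rewrite S_sumb; apply: eq_bigr => x _; rewrite /N -S_scale.
by apply: S_ext => f1 _; rewrite S_scale.
Qed.

Lemma Ex_leaf p s g :
  Ex (PLeaf p) s g = trans p s true * g [:: true] + trans p s false * g [:: false].
Proof. by []. Qed.

Lemma Ex_add t s g h : Ex t s (fun f => g f + h f) = Ex t s g + Ex t s h.
Proof. rewrite /Ex -S_add; apply: S_ext => f _; by rewrite mulrDr. Qed.

Lemma Ex_scale t s c g : Ex t s (fun f => c * g f) = c * Ex t s g.
Proof. rewrite /Ex -S_scale; apply: S_ext => f _; by rewrite mulrCA. Qed.

Lemma Ex_ext t s g h : (forall f, size f = pleaves t -> g f = h f) -> Ex t s g = Ex t s h.
Proof. move=> H; apply: S_ext => f Hf; by rewrite H. Qed.

Lemma sum_trans (p : R) s : \sum_(x : bool) trans p s x = 1.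
Proof. rewrite big_bool /trans; case: s => /=; lra. Qed.

Lemma sum_trans_sg (p : R) s : \sum_(x : bool) trans p s x * sg x = sg s * (1 - 2 * p).
Proof. rewrite big_bool /trans /sg; case: s => /=; lra. Qed.

Lemma Ex_one t s : Ex t s (fun _ => 1) = 1.
Proof.
elim: t s => [p|p l IHl r IHr] s.
  by rewrite Ex_leaf /trans; case: s => /=; lra.
rewrite Ex_node -[RHS](sum_trans p s); apply: eq_bigr => x _.
have -> : N (cprob l) (cprob r) (pleaves l) (pleaves r) x (fun _ _ => 1) =
  N (cprob l) (cprob r) (pleaves l) (pleaves r) x (fun _ _ => 1 * 1).
  by apply: N_ext => *; rewrite mulr1.
by rewrite N_prod -/(Ex l x _) -/(Ex r x _) IHl IHr !mulr1.
Qed.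

Lemma comb_cond (A B : {set bool}) :
  (A :&: B != set0) = ((true \in A) && (true \in B)) || ((false \in A) && (false \in B)).
Proof.
apply/set0Pn/idP => [[[] ]|]; rewrite ?inE => H.
- by rewrite H.
- by rewrite H orbT.
case/orP: H => H; [exists true | exists false]; by rewrite inE.
Qed.

Lemma mem_comb (A B : {set bool}) x :
  x \in fitch_comb A B =
  if ((true \in A) && (true \in B)) || ((false \in A) && (false \in B))
  then (x \in A) && (x \in B) else (x \in A) || (x \in B).
Proof. by rewrite /fitch_comb comb_cond; case: ifP; rewrite inE. Qed.

Lemma xv_comb (A B : {set bool}) :
  xv (fitch_comb A B) = (2^-1 * xv A) * 1 + 1 * (2^-1 * xv B)
    + (2^-1 * (1 - xv A ^+ 2)) * xv B + (2^-1 * xv A) * (1 - xv B ^+ 2).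
Proof.
rewrite /xv !mem_comb.
case: (true \in A); case: (false \in A); case: (true \in B); case: (false \in B) => /=;
  rewrite ?mulr1n ?mulr0n; lra.
Qed.

Lemma xv2_comb (A B : {set bool}) :
  1 - xv (fitch_comb A B) ^+ 2 =
    (1 - xv A ^+ 2) * (1 - xv B ^+ 2) + (2^-1 * 1) * 1
    + (- 2^-1 * (1 - xv A ^+ 2)) * 1 + 1 * (- 2^-1 * (1 - xv B ^+ 2))
    + (2^-1 * (1 - xv A ^+ 2)) * (1 - xv B ^+ 2) + (- 2^-1 * xv A) * xv B.
Proof.
rewrite /xv !mem_comb.
case: (true \in A); case: (false \in A); case: (true \in B); case: (false \in B) => /=;
  rewrite ?mulr1n ?mulr0n; lra.
Qed.

Lemma xv2_ge0 A : 0 <= 1 - xv A ^+ 2.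
Proof. rewrite /xv; case: (true \in A); case: (false \in A) => /=; rewrite ?mulr1n ?mulr0n; lra. Qed.

Lemma trans_ge0 (p : R) s x : 0 <= p -> p <= 2^-1 -> 0 <= trans p s x.
Proof. rewrite /trans; case: ifP => _ *; lra. Qed.

Lemma cprob_ge0 (t : ptree R) s f : pvalid t -> 0 <= cprob t s f.
Proof.
elim: t s f => [p|p l IHl r IHr] s f /=.
  case/andP => H1 H2; case: f => [|x [|]] //; exact: trans_ge0.
case/and4P => H1 H2 Hl Hr; apply: sumr_ge0 => x _.
by rewrite !mulr_ge0 // ?IHl ?IHr // trans_ge0.
Qed.

Lemma Ex_ge0 t s g : pvalid t -> (forall f, 0 <= g f) -> 0 <= Ex t s g.
Proof. move=> Ht Hg; apply: S_ge0 => f; by rewrite mulr_ge0 // cprob_ge0. Qed.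
Fixpoint lm (t : ptree R) : R :=
  match t with PLeaf p => 1 - 2 * p
  | PNode p l r => (1 - 2 * p) * Num.min (lm l) (lm r) end.

Lemma fitch_node (p : R) (l r : ptree R) f1 f2 : size f1 = pleaves l ->
  fitch_t (PNode p l r) (f1 ++ f2) = fitch_comb (fitch_t l f1) (fitch_t r f2).
Proof. move=> H /=; by rewrite take_size_cat // drop_size_cat. Qed.

Lemma xv1 b : xv [set b] = sg b.
Proof. by rewrite /xv !inE; case: b => /=; rewrite ?mulr1n ?mulr0n; lra. Qed.

Lemma inv (t : ptree R) : pvalid t -> exists K B,
  [/\ (forall s, Ex t s (fun f => xv (fitch_t t f)) = sg s * K),
      (forall s, Ex t s (fun f => 1 - xv (fitch_t t f) ^+ 2) = B),
      0 <= B, lm t <= K & 0 <= lm t].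
Proof.
elim: t => [p|p l IHl r IHr] /=.
  case/andP => H1 H2; exists (1 - 2 * p), 0; split => //=; last lra.
    move=> s; rewrite Ex_leaf /= !xv1 /trans /sg; case: s => /=; lra.
  move=> s; rewrite Ex_leaf /= !xv1 /trans /sg; case: s => /=; lra.
case/and4P => H1 H2 Hl Hr.
have [Kl [Bl [EKl EBl HBl HKl Hl0]]] := IHl Hl.
have [Kr [Br [EKr EBr HBr HKr Hr0]]] := IHr Hr.
set Kn := 2^-1 * Kl + 2^-1 * Kr + 2^-1 * (Bl * Kr) + 2^-1 * (Kl * Br).
have Hmin : Num.min (lm l) (lm r) <= Kn.
  have : Num.min (lm l) (lm r) <= lm l by rewrite ge_min lexx.
  have : Num.min (lm l) (lm r) <= lm r by rewrite ge_min lexx orbT.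
  have : 0 <= Bl * Kr by apply: mulr_ge0 => //; lra.
  have : 0 <= Kl * Br by apply: mulr_ge0 => //; lra.
  rewrite /Kn; lra.
set Bn := Bl * Br + 2^-1 * 1 - 2^-1 * Bl - 2^-1 * Br + 2^-1 * (Bl * Br) - 2^-1 * (Kl * Kr).
have EBn : forall s, Ex (PNode p l r) s (fun f => 1 - xv (fitch_t (PNode p l r) f) ^+ 2) = Bn.
  move=> s; rewrite Ex_node.
  transitivity (\sum_(x : bool) trans p s x * Bn); last by rewrite -mulr_suml sum_trans mul1r.
  apply: eq_bigr => x _.
  congr (_ * _).
  rewrite (@N_ext _ _ _ _ _ _ (fun f1 f2 =>
    (1 - xv (fitch_t l f1) ^+ 2) * (1 - xv (fitch_t r f2) ^+ 2) + (2^-1 * 1) * 1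
    + (- 2^-1 * (1 - xv (fitch_t l f1) ^+ 2)) * 1 + 1 * (- 2^-1 * (1 - xv (fitch_t r f2) ^+ 2))
    + (2^-1 * (1 - xv (fitch_t l f1) ^+ 2)) * (1 - xv (fitch_t r f2) ^+ 2)
    + (- 2^-1 * xv (fitch_t l f1)) * xv (fitch_t r f2))); last first.
    by move=> f1 f2 Hf1 _ /=; rewrite take_size_cat // drop_size_cat // xv2_comb.
  rewrite !N_add !N_prod -!/(Ex _ _ _) !Ex_scale !Ex_one EKl EKr EBl EBr.
  rewrite /Bn; case: x => /=; rewrite /sg; ring.
exists ((1 - 2 * p) * Kn), Bn; split => //.
- move=> s; rewrite Ex_node mulrA -sum_trans_sg mulr_suml; apply: eq_bigr => x _.
  rewrite -mulrA; congr (_ * _).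
  rewrite (@N_ext _ _ _ _ _ _ (fun f1 f2 =>
      (2^-1 * xv (fitch_t l f1)) * 1 + 1 * (2^-1 * xv (fitch_t r f2))
    + (2^-1 * (1 - xv (fitch_t l f1) ^+ 2)) * xv (fitch_t r f2)
    + (2^-1 * xv (fitch_t l f1)) * (1 - xv (fitch_t r f2) ^+ 2))); last first.
    by move=> f1 f2 Hf1 _ /=; rewrite take_size_cat // drop_size_cat // xv_comb.
  rewrite !N_add !N_prod -!/(Ex _ _ _) !Ex_scale !Ex_one EKl EKr EBl EBr.
  rewrite /Kn; case: x => /=; rewrite /sg; ring.
- have := @Ex_ge0 (PNode p l r) true (fun f => 1 - xv (fitch_t (PNode p l r) f) ^+ 2).
  rewrite EBn; apply; [by rewrite /= H1 H2 Hl Hr | move=> f; exact: xv2_ge0].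
- apply: ler_wpM2l => //; lra.
- apply: mulr_ge0; first lra.
  by rewrite le_min Hl0 Hr0.
Qed.

Fixpoint pp (t : ptree R) (i : nat) : R :=
  match t with PLeaf p => 1 - 2 * p
  | PNode p l r => (1 - 2 * p) *
      (if (i < pleaves l)%N then pp l i else pp r (i - pleaves l)) end.

Lemma marg (t : ptree R) s i : (i < pleaves t)%N ->
  Ex t s (fun f => sg (nth false f i)) = sg s * pp t i.
Proof.
elim: t s i => [p|p l IHl r IHr] s i /= Hi.
  case: i Hi => // _; rewrite Ex_leaf /trans /sg; case: s => /=; lra.
rewrite Ex_node; case: ifP => Hil.
  transitivity (\sum_(x : bool) trans p s x * sg x * pp l i); last first.
    by rewrite -mulr_suml sum_trans_sg; ring.
  apply: eq_bigr => x _.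
  rewrite (@N_ext _ _ _ _ _ _ (fun f1 f2 => sg (nth false f1 i) * 1)); last first.
    by move=> f1 f2 H1 _; rewrite nth_cat H1 Hil mulr1.
  by rewrite N_prod -!/(Ex _ _ _) IHl // Ex_one mulr1 mulrA.
transitivity (\sum_(x : bool) trans p s x * sg x * pp r (i - pleaves l)); last first.
  by rewrite -mulr_suml sum_trans_sg; ring.
apply: eq_bigr => x _.
rewrite (@N_ext _ _ _ _ _ _ (fun f1 f2 => 1 * sg (nth false f2 (i - pleaves l)))); last first.
  by move=> f1 f2 H1 _; rewrite nth_cat H1 Hil mul1r.
rewrite N_prod -!/(Ex _ _ _) IHr ?Ex_one ?mul1r ?mulrA //.
by rewrite ltn_subLR ?Hi // leqNgt Hil.
Qed.

Lemma argmin (t : ptree R) : exists2 i, (i < pleaves t)%N & pp t i = lm t.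
Proof.
elim: t => [p|p l [i Hi Ei] r [j Hj Ej]] /=; first by exists 0%N.
case: (boolP (lm l <= lm r)) => H.
  exists i; first by rewrite ltn_addr.
  by rewrite Hi Ei min_l.
rewrite -ltNge in H.
exists (pleaves l + j)%N; first by rewrite ltn_add2l.
by rewrite ltnNge leq_addr /= addKn Ej min_r // ltW.
Qed.

Lemma fitch_ne0 (t : ptree R) f : fitch_t t f != set0.
Proof.
elim: t f => [p|p l IHl r IHr] f /=.
  by apply/set0Pn; exists (head false f); rewrite inE.
rewrite /fitch_comb; case: ifP => // _.
by rewrite setU_eq0 negb_and IHl.
Qed.

Lemma ra_ind (A : {set bool}) a : A != set0 ->
  (if a \in A then (#|A|%:R)^-1 else 0) = 2^-1 * 1 + 2^-1 * (sg a * xv A) :> R.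
Proof.
move=> /set0Pn [y Hy].
have -> : #|A| = ((true \in A) + (false \in A))%N.
  by rewrite -sum1_card big_mkcond big_bool.
rewrite /xv; move: Hy; case: a; case: y;
case: (true \in A); case: (false \in A) => //= _;
  rewrite -?[(1 + 1)%N]/2%N /sg ?mulr1n ?mulr0n ?invr1; lra.
Qed.

Lemma bigmax_ge n (F : 'I_n -> R) i : F i <= \big[Num.max/0]_(j < n) F j.
Proof.
rewrite -big_enum; have : i \in enum 'I_n by rewrite mem_enum.
elim: (enum 'I_n) => // x s IH; rewrite inE big_cons le_max.
case/orP => [/eqP -> | /IH ->]; by rewrite ?lexx ?orbT.
Qed.

Lemma main_p (t : ptree R) a : pvalid t ->
 1 - \big[Num.max/0]_(i < pleaves t)
     (\sum_(f : (pleaves t).-tuple bool) cprob t a f * (if tnth f i != a then 1 else 0))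
 <= \sum_(f : (pleaves t).-tuple bool)
     cprob t a f * (if a \in fitch_t t f then (#|fitch_t t f|%:R)^-1 else 0).
Proof.
move=> Ht; have [K [B [EK _ _ HK _]]] := inv Ht.
have [i0 Hi0 Ei0] := argmin t.
rewrite (@S_tuple (pleaves t) (fun f => cprob t a f *
   (if a \in fitch_t t f then (#|fitch_t t f|%:R)^-1 else 0))).
rewrite -/(Ex t a _) (@Ex_ext _ _ _ (fun f => 2^-1 * 1 + 2^-1 * (sg a * xv (fitch_t t f))));
  last by move=> f _; rewrite ra_ind // fitch_ne0.
rewrite Ex_add !Ex_scale Ex_one EK.
have := bigmax_ge (fun i : 'I_(pleaves t) =>
   \sum_(f : (pleaves t).-tuple bool) cprob t a f * (if tnth f i != a then 1 else 0))
   (Ordinal Hi0).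
rewrite /=.
under eq_bigr do rewrite (tnth_nth false) /=.
rewrite (@S_tuple (pleaves t) (fun f => cprob t a f * (if nth false f i0 != a then 1 else 0))).
rewrite -/(Ex t a _) (@Ex_ext _ _ _ (fun f => 2^-1 * 1 + (- 2^-1) * (sg a * sg (nth false f i0))));
  last by move=> f _; case: a; case: (nth false f i0); rewrite /sg /=; lra.
rewrite Ex_add !Ex_scale Ex_one marg // Ei0.
have -> : sg a * (sg a * lm t) = lm t by case: a; rewrite /sg; ring.
have -> : sg a * (sg a * K) = K by case: a; rewrite /sg; ring.
lra.
Qed.
End S.

Theorem corollary1 (R : realFieldType) (T : rtree R) (a : bool) :
  rvalid T -> 1 - pmax T a <= RA_MP T a.
Proof.
have H1 : forall t : ptree R, pvalid t -> 1 - pmax (Root1 t) a <= RA_MP (Root1 t) a.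
  by move=> t Ht; exact: (main_p a Ht).
case: T => [t|l r] /=; first exact: H1.
case/andP => Hl Hr.
have E : forall f, rprob (Root2 l r) a f = rprob (Root1 (PNode 0 l r)) a f.
  move=> f /=; rewrite big_bool /trans; clear H1; case: a => /=; ring.
have -> : RA_MP (Root2 l r) a = RA_MP (Root1 (PNode 0 l r)) a.
  by rewrite /RA_MP; apply: eq_bigr => f _; rewrite E.
have -> : pmax (Root2 l r) a = pmax (Root1 (PNode 0 l r)) a.
  rewrite /pmax; apply: eq_bigr => i _; rewrite /pleaf.
  by apply: eq_bigr => f _; rewrite E.
apply: H1; rewrite /= Hl Hr lexx andbT /=.
by rewrite invr_ge0 ler0n.
Qed.
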